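(* Encode a configuration of the Tower of Hanoi with $n$ disks $1,\dots,n$ (disk $j$ smaller than disk $j+1$) on pegs $0,1,2$ by the word $x_1\dots x_n\in\{0,1,2\}^n$ where disk $j$ lies on peg $x_j$. Let $\Gamma_n$ be the graph with vertex set $\{0,1,2\}^n$ in which $u$ and $v$ are adjacent iff $v=a_{xy}(u)\ne u$ for some $0\le x<y\le2$, where $a_{xy}$ changes the first occurrence in $u$ of either $x$ or $y$ into the other symbol. For distinct $x,y\in\{0,1,2\}$ there is a unique shortest path in $\Gamma_n$ from $x^n$ to $y^n$ (of length $2^n-1$); for $0\le i\le 2^n-1$ let $C^{xy}_i(n)$ be the configuration at distance $i$ from $x^n$ along it. For each ordered pair $(x,y)$ of distinct elements of $\{0,1,2\}$, with $z$ the third element, define maps $q_{xy}$ from binary words to ternary words by $q_{xy}(\emptyset)=\emptyset$, $q_{xy}(0w)=x\,q_{xz}(w)$, $q_{xy}(1w)=y\,q_{zy}(w)$. For $0\le i\le2^n-1$ let $[i]_2$ be the length-$n$ binary representation of $i$, least significant digit first (padded with zeros). Then for all $n\ge1$, all distinct $x,y$, and all $0\le i\le 2^n-1$, \[q_{xy}\big([i]_2^R\big)=\big(C^{xy}_i(n)\big)^R,\] where $R$ denotes word reversal. *)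

(* Defs.v *)
(* Pegs are 'I_3; configurations are words in seq 'I_3,
   position j-1 of the word = peg of disk j (smallest disk first). *)
From mathcomp Require Import all_boot.
Set Implicit Arguments. Unset Strict Implicit. Unset Printing Implicit Defensive.

Fixpoint amove (x y : 'I_3) (u : seq 'I_3) : seq 'I_3 :=
  match u with
  | [::] => [::]
  | c :: u' => if c == x then y :: u' else if c == y then x :: u' else c :: amove x y u'
  end.

Definition hadj (u v : seq 'I_3) : bool :=
  [exists x : 'I_3, exists y : 'I_3, [&& x < y, v == amove x y u & v != u]].

Definition hwalk (n : nat) (x y : 'I_3) (p : seq (seq 'I_3)) : Prop :=
  match p with
  | [::] => False
  | s :: rest => [/\ s = nseq n x, path hadj s rest & last s rest = nseq n y]
  end.

Definition hshortest (n : nat) (x y : 'I_3) (p : seq (seq 'I_3)) : Prop :=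
  hwalk n x y p /\ forall p', hwalk n x y p' -> size p <= size p'.

Definition third (x y : 'I_3) : 'I_3 := inord (3 - x - y).

(* q_xy on binary words (false = 0, true = 1) *)
Fixpoint qmap (x y : 'I_3) (w : seq bool) : seq 'I_3 :=
  match w with
  | [::] => [::]
  | false :: w' => x :: qmap x (third x y) w'
  | true :: w' => y :: qmap (third x y) y w'
  end.

Definition bin (n i : nat) : seq bool := mkseq (fun k => odd (i %/ 2 ^ k)) n.

(* Main.v *)
Require Import Defs.
From mathcomp Require Import all_boot zify.
Lemma neqv (x y : 'I_3) : (x != y) = (nat_of_ord x != nat_of_ord y).
Proof. by []. Qed.
Lemma third_val (x y : 'I_3) : x != y -> nat_of_ord (third x y) = 3 - x - y.
Proof. rewrite neqv => H; rewrite /third inordK //; lia. Qed.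
Lemma third_ne (x y : 'I_3) : x != y -> (third x y != x) && (third x y != y).
Proof. move=> H; rewrite !neqv third_val //; move: H; rewrite neqv; have := ltn_ord x; have := ltn_ord y; lia. Qed.
Lemma third_sym (x y : 'I_3) : third x y = third y x.
Proof. by rewrite /third subnAC. Qed.
Lemma third_uniq (x y c : 'I_3) : x != y -> c != x -> c != y -> c = third x y.
Proof. move=> H H1 H2; apply/eqP; rewrite -(inj_eq val_inj) /= third_val //.
move: H H1 H2; rewrite !neqv; have := ltn_ord x; have := ltn_ord y; have := ltn_ord c; lia. Qed.
Definition sw (p q c : 'I_3) := if c == p then q else if c == q then p else c.
Lemma amove_rcons p q a c : amove p q (rcons a c) =
  if has (fun d => (d == p) || (d == q)) a then rcons (amove p q a) c else rcons a (sw p q c).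
Proof. elim: a => [|d a IH] /=; first by rewrite /sw; case: (c == p); case: (c == q).
by case: ifP => //= _; case: ifP => //= _; rewrite IH; case: ifP. Qed.
Lemma amove_nohas p q a : ~~ has (fun d => (d == p) || (d == q)) a -> amove p q a = a.
Proof. elim: a => [|d a IH] //=; rewrite !negb_or => /andP[/andP[/negbTE-> /negbTE->] /IH ->] //. Qed.
Lemma amove_size p q a : size (amove p q a) = size a.
Proof. elim: a => [|d a IH] //=; by case: (d == p); case: (d == q) => //=; rewrite IH. Qed.
Lemma amoveK p q a : p != q -> amove p q (amove p q a) = a.
Proof. move=> pq; elim: a => [|d a IH] //=. case: (eqVneq d p) => [->|dp] /=; first by rewrite ?eqxx /= eq_sym (negbTE pq) ?eqxx.
case: (eqVneq d q) => [->|dq] /=; first by rewrite ?eqxx ?(negbTE pq) /= ?eqxx ?(negbTE pq).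
by rewrite ?(negbTE dp) ?(negbTE dq) /= ?(negbTE dp) ?(negbTE dq) IH. Qed.
Lemma amoveC p q a : p != q -> amove p q a = amove q p a.
Proof. move=> pq; elim: a => [|d a IH] //=. case: (eqVneq d p) => [->|dp].
  by rewrite (negbTE pq).
by rewrite IH. Qed.
Lemma hadjP u v : reflect (exists p q, [/\ p != q, v = amove p q u & v != u]) (hadj u v).
Proof. apply: (iffP existsP) => [[p /existsP[q /and3P[pq /eqP e ne]]]|[p [q [pq e ne]]]].
  by exists p, q; split => //; rewrite neq_ltn pq.
case: (ltngtP p q) => [lt|gt|eq].
- by exists p; apply/existsP; exists q; rewrite lt ne e eqxx.
- by exists q; apply/existsP; exists p; rewrite gt ne e amoveC // eqxx.
- by move: pq; rewrite (val_inj eq) eqxx.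
Qed.
Lemma hadj_sym u v : hadj u v -> hadj v u.
Proof. move=> /hadjP[p [q [pq e ne]]]; apply/hadjP; exists p, q; split => //; last by rewrite eq_sym.
by rewrite e amoveK. Qed.
Lemma hadj_size u v : hadj u v -> size v = size u.
Proof. by move=> /hadjP[p [q [pq -> _]]]; rewrite amove_size. Qed.
Lemma hadj_rc u v c : hadj u v -> hadj (rcons u c) (rcons v c).
Proof. move=> /hadjP[p [q [pq e ne]]]; apply/hadjP; exists p, q; split => //.
  rewrite amove_rcons; case: ifP => [_|/negbT h]; first by rewrite e.
  by move: ne; rewrite e amove_nohas ?eqxx.
by apply: contra ne => /eqP/rcons_inj [->]. Qed.
Lemma nseqSr n (x : 'I_3) : nseq n.+1 x = rcons (nseq n x) x.
Proof. by elim: n => //= n <-. Qed.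

Lemma step_rc a x v : hadj (rcons a x) v -> exists b d, v = rcons b d /\
  (if d == x then is_true (hadj a b) else (b = a /\ all (fun e => (e != x) && (e != d)) a)).
Proof.
move=> /hadjP[p [q [pq e ne]]]; rewrite amove_rcons in e.
case: ifP => [h|/negbT h] in e.
  exists (amove p q a), x; split => //; rewrite eqxx; apply/hadjP; exists p, q; split => //.
  by apply: contra ne => /eqP E; rewrite e E.
have swx : sw p q x != x by apply: contra ne => /eqP E; rewrite e E.
exists a, (sw p q x); split => //; rewrite (negbTE swx); split => //.
apply/allP => d din; have : ~~ ((d == p) || (d == q)).
  by apply: contra h => H; apply/hasP; exists d.
move: swx; rewrite /sw; case: (eqVneq x p) => [->|xp]; first by rewrite negb_or andbC.
by case: (eqVneq x q) => [->|xq]; rewrite ?eqxx // => _; rewrite negb_or andbC.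
Qed.

Lemma path_size a ps : path hadj a ps -> size (last a ps) = size a.
Proof. elim: ps a => [|b ps IH] a //= /andP[h /IH ->]; exact: hadj_size. Qed.

Lemma split_first x a rest : path hadj (rcons a x) rest ->
  has (fun v => last x v != x) rest ->
  exists ps a' w rest', [/\ rcons a x :: rest = map (rcons^~ x) (a :: ps) ++ rcons a' w :: rest',
    path hadj a ps, last a ps = a', w != x & all (fun e => (e != x) && (e != w)) a'].
Proof.
elim: rest a => [|v rest IH] a //= /andP[hv hp] hh.
have [b [d [ev H]]] := step_rc _ _ _ hv; subst v.
case: (eqVneq d x) => [dx|dx] in H hh hp *.
  subst d; move: hh; rewrite last_rcons eqxx /= => hh.
  have [ps [a' [w [rest' [E P L W A]]]]] := IH b hp hh.
  exists (b :: ps), a', w, rest'; split => //=; last by rewrite H.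
  by rewrite E.
case: H => -> A; exists [::], a, d, rest; split => //.
Qed.

Fixpoint canon n (x y : 'I_3) : seq (seq 'I_3) :=
  match n with
  | 0 => [:: [::]]
  | n'.+1 => map (rcons^~ x) (canon n' x (third x y)) ++ map (rcons^~ y) (canon n' (third x y) y)
  end.

Lemma size_canon n x y : size (canon n x y) = 2 ^ n.
Proof. elim: n x y => [|n IH] x y //=; by rewrite size_cat !size_map !IH expnS mul2n addnn. Qed.

Lemma rev_canon n x y : rev (canon n x y) = canon n y x.
Proof. elim: n x y => [|n IH] x y //=; by rewrite rev_cat -!map_rev !IH third_sym. Qed.

Lemma path_rc a r c : path hadj a r -> path hadj (rcons a c) (map (rcons^~ c) r).
Proof. elim: r a => [|b r IH] a //= /andP[h /IH ->]; by rewrite hadj_rc. Qed.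

Lemma canon_walk n x y : x != y -> exists r, [/\ canon n x y = nseq n x :: r,
  path hadj (nseq n x) r & last (nseq n x) r = nseq n y].
Proof.
elim: n x y => [|n IH] x y xy; first by exists [::].
have /andP[zx zy] := third_ne _ _ xy.
have [r1 [E1 P1 L1]] := IH x (third x y) ltac:(by rewrite eq_sym).
have [r2 [E2 P2 L2]] := IH (third x y) y zy.
exists (map (rcons^~ x) r1 ++ map (rcons^~ y) (nseq n (third x y) :: r2)).
rewrite (nseqSr n x) (nseqSr n y) /= E1 E2; split => //.
  rewrite cat_path path_rc //= (last_map (rcons^~ x)) L1 path_rc // andbT.
  apply/hadjP; exists x, y; split => //.
    by rewrite amove_rcons has_nseq /= (negbTE zx) (negbTE zy) andbF /sw eqxx.
  by apply/eqP => /rcons_inj [] /eqP; rewrite eq_sym (negbTE xy).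
by rewrite last_cat /= (last_map (rcons^~ y)) L2.
Qed.

Lemma walk_rev n x y p : hwalk n x y p -> hwalk n y x (rev p).
Proof.
case: p => [|s rest] //= [Hs P L].
have E : last s rest :: rev (belast s rest) = rev (s :: rest) by rewrite [s :: rest]lastI rev_rcons.
rewrite -E /=; split => //.
  by rewrite rev_path; apply: sub_path P => u v /hadj_sym.
by rewrite -(last_cons s) E rev_cons last_rcons.
Qed.

Definition hIH n := forall x y p, x != y -> hwalk n x y p ->
  2 ^ n <= size p /\ (size p = 2 ^ n -> p = canon n x y).

Lemma half n x y p : hIH n -> x != y -> hwalk n.+1 x y p ->
  exists ps a' w R, [/\ p = map (rcons^~ x) ps ++ rcons a' w :: R, 2 ^ n <= size ps
    & size ps = 2 ^ n -> ps = canon n x (third x w)].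
Proof.
move=> IH xy; case: p => [|s rest] //= [Hs P L].
have hh : has (fun v => last x v != x) rest.
  case: rest => [|v r] in P L *.
    by move: L => /=; rewrite Hs => -[] /eqP; rewrite (negbTE xy).
  apply/hasP; exists (last v r); first exact: mem_last.
  have -> : last v r = nseq n.+1 y by exact: L.
  by rewrite nseqSr last_rcons eq_sym.
have Hs2 : s = rcons (nseq n x) x by rewrite -nseqSr; exact: Hs.
rewrite Hs2 in P *.
have [ps [a' [w [R [E P' L' W A]]]]] := split_first _ _ _ P hh.
have xw : x != w by rewrite eq_sym.
have Ha' : a' = nseq n (third x w).
  have : size a' = n by rewrite -L' (path_size _ _ P') size_nseq.
  move=> <-; apply/all_pred1P; apply/allP => e /(allP A) /andP[e1 e2].
  by rewrite /= (third_uniq _ _ _ xw e1 e2).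
have /andP[tx tw] := third_ne _ _ xw.
have hw : hwalk n x (third x w) (nseq n x :: ps) by split => //; rewrite L'.
have xt : x != third x w by rewrite eq_sym.
have [lb eq] := IH _ _ _ xt hw.
by exists (nseq n x :: ps), a', w, R; split.
Qed.

Lemma hmain n : hIH n.
Proof.
elim: n => [|n IH] x y p xy.
  case: p => [|s rest] //= [-> _ _]; split => //.
  by case: rest.
move=> hw.
have yx : y != x by rewrite eq_sym.
have [ps [a' [w [R [E lb Heq]]]]] := half _ _ _ _ IH xy hw.
have [qs [b' [w2 [R2 [E2 lb2 Heq2]]]]] := half _ _ _ _ IH yx (walk_rev _ _ _ _ hw).
have c1 : size ps <= count (fun v => last x v == x) p.
  rewrite E count_cat count_map (eq_count (a2 := predT)) ?count_predT ?leq_addr //.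
  by move=> v /=; rewrite last_rcons eqxx.
have c2 : size qs <= count (fun v => last x v == y) p.
  rewrite -count_rev E2 count_cat count_map (eq_count (a2 := predT)) ?count_predT ?leq_addr //.
  by move=> v /=; rewrite last_rcons eqxx.
have c3 : count (fun v => last x v == x) p + count (fun v => last x v == y) p <= size p.
  rewrite -count_predUI (eq_count (a1 := predI _ _) (a2 := pred0)) ?count_pred0 ?addn0 ?count_size //.
  by move=> v /=; case: eqP => // ->; rewrite (negbTE xy).
have e2 : 2 ^ n.+1 = 2 ^ n + 2 ^ n by rewrite expnS mul2n addnn.
split; first by lia.
move=> sp.
have s1 : size ps = 2 ^ n by lia.
have s2 : size qs = 2 ^ n by lia.
have {}Heq := Heq s1; have {}Heq2 := Heq2 s2.
have : rev p = rev p by [].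
rewrite {1}E2 {1}E rev_cat => /eqP; rewrite eqseq_cat; last first.
  by rewrite size_rev size_map s2; move: sp; rewrite E size_cat size_map s1 e2 => /addnI ->.
case/andP => /eqP F1 /eqP F2.
have Fy : rcons a' w \in map (rcons^~ y) (rev qs).
  by rewrite map_rev F1 revK mem_head.
have Fx : rcons b' w2 \in map (rcons^~ x) (rev ps).
  by rewrite map_rev -F2 mem_head.
case/mapP: Fy => v _ /rcons_inj [_ wy].
case/mapP: Fx => v' _ /rcons_inj [_ wx].
subst w w2.
have R1 : rcons a' y :: R = map (rcons^~ y) (rev qs) by rewrite map_rev F1 revK.
rewrite E R1 Heq Heq2 rev_canon third_sym /=.
by rewrite third_sym.
Qed.

Lemma bin_S n i : rev (bin n.+1 i) = odd (i %/ 2 ^ n) :: rev (bin n i).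
Proof. by rewrite /bin mkseqS rev_rcons. Qed.

Lemma bin_sub n i : 2 ^ n <= i -> bin n i = bin n (i - 2 ^ n).
Proof.
move=> h; rewrite /bin /mkseq; apply/eq_in_map => k; rewrite mem_iota add0n /= => kn.
rewrite {1}(_ : i = 2 ^ (n - k) * 2 ^ k + (i - 2 ^ n)); last first.
  by rewrite -expnD subnK ?(ltnW kn) // addnC subnK.
rewrite divnMDl ?expn_gt0 // oddD oddX /=.
by rewrite subn_eq0 leqNgt kn.
Qed.

Lemma canon_nth n x y i : i < 2 ^ n -> qmap x y (rev (bin n i)) = rev (nth [::] (canon n x y) i).
Proof.
elim: n x y i => [|n IH] x y i.
  by rewrite expn0 ltnS leqn0 => /eqP ->.
move=> hi; rewrite bin_S /= nth_cat size_map size_canon.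
have e2 : 2 ^ n.+1 = 2 ^ n + 2 ^ n by rewrite expnS mul2n addnn.
case: (ltnP i (2 ^ n)) => h.
  rewrite divn_small //= IH // (nth_map [::]) ?size_canon //.
  by rewrite rev_rcons.
have -> : i %/ 2 ^ n = 1.
  rewrite {1}(_ : i = 1 * 2 ^ n + (i - 2 ^ n)) ?divnMDl ?expn_gt0 ?divn_small //; first by lia.
  by rewrite mul1n addnC subnK.
rewrite /= bin_sub // IH; last by lia.
by rewrite (nth_map [::]) ?size_canon ?rev_rcons //; lia.
Qed.

Theorem mainTheorem13 (n : nat) (x y : 'I_3) :
  0 < n -> x != y ->
  (exists p, hshortest n x y p) /\
  (forall p, hshortest n x y p ->
     forall i, i <= 2 ^ n - 1 ->
       qmap x y (rev (bin n i)) = rev (nth [::] p i)).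
Proof.
move=> n0 xy.
have hc : hwalk n x y (canon n x y).
  by have [r [-> P L]] := canon_walk n x y xy; split.
split.
  exists (canon n x y); split => // p' hp'.
  by rewrite size_canon; case: (hmain n x y p' xy hp').
move=> p [hp hmin] i hi.
have [lb eq] := hmain n x y p xy hp.
have sp : size p = 2 ^ n by apply/eqP; rewrite eqn_leq lb -(size_canon n x y) hmin.
rewrite (eq sp) canon_nth //.
have := expn_gt0 2 n; lia.
Qed.
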